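(* Let $(X,d)$ be an $F$-space with non-decreasing metric $d$ and let $\{A_n\}$ be an approximation scheme on $X$. Suppose there exist an infinite set $\mathbb{N}_0\subseteq\mathbb{N}$, a bounded subset $\{x_n\}_{n\in\mathbb{N}_0}$ of $X$ and $c>0$ such that $c\le E(x_n,A_n)$ for all $n\in\mathbb{N}_0$. Then $\{A_n\}$ satisfies Shapiro's theorem on $X$.
   Context: An $F$-space is a complete metric vector space with translation-invariant metric $d$; $d$ is non-decreasing if $d(\alpha x,0)\le d(x,0)$ for $0\le\alpha\le1$. A subset $A\subseteq X$ is bounded (in the topological vector space sense) if for every $r>0$ there exists $\lambda>0$ with $A\subseteq\lambda B(0,r)$, where $B(0,r)=\{y:d(y,0)\le r\}$. An approximation scheme on $X$ is a chain $A_0\subsetneq A_1\subsetneq\cdots\subsetneq X$ of subsets with: (A1) there is $K:\mathbb{N}\to\mathbb{N}$, $K(n)\ge n$, $A_n+A_n\subseteq A_{K(n)}$; (A2) $\lambda A_n\subseteq A_n$ for all scalars $\lambda$; (A3) $\bigcup_nA_n$ dense in $X$. $E(x,A)=\inf_{a\in A}d(x,a)$. $\{A_n\}$ satisfies Shapiro's theorem on $X$ if for every non-increasing sequence $\{\varepsilon_n\}$ of nonnegative reals tending to $0$ there exists $x\in X$ with $E(x,A_n)\neq\mathbf{O}(\varepsilon_n)$. *)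

(* Defs.v *)
From HB Require Import structures.
From mathcomp Require Import all_boot all_order all_algebra.
From mathcomp Require Import all_classical all_reals ereal.
Set Implicit Arguments. Unset Strict Implicit. Unset Printing Implicit Defensive.
Import Order.TTheory GRing.Theory Num.Theory.
Local Open Scope classical_set_scope.
Local Open Scope ring_scope.

Section FSpace.
Variables (R : realType) (X : lmodType R).

Definition is_metric (d : X -> X -> R) : Prop :=
  (forall x y, 0 <= d x y) /\ (forall x y, d x y = 0 <-> x = y) /\
  (forall x y, d x y = d y x) /\ (forall x y z, d x z <= d x y + d y z).

Definition translation_invariant (d : X -> X -> R) : Prop :=
  forall x y z, d (x + z) (y + z) = d x y.

Definition add_continuous (d : X -> X -> R) : Prop :=
  forall x y (e : R), 0 < e -> exists2 del : R, 0 < del &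
    forall x' y', d x' x < del -> d y' y < del -> d (x' + y') (x + y) < e.

Definition scale_continuous (d : X -> X -> R) : Prop :=
  forall (l : R) x (e : R), 0 < e -> exists2 del : R, 0 < del &
    forall (l' : R) x', `|l' - l| < del -> d x' x < del ->
      d (l' *: x') (l *: x) < e.

Definition d_cauchy (d : X -> X -> R) (u : nat -> X) : Prop :=
  forall e : R, 0 < e -> exists N, forall m n, (N <= m)%N -> (N <= n)%N ->
    d (u m) (u n) < e.

Definition d_converges (d : X -> X -> R) (u : nat -> X) (x : X) : Prop :=
  forall e : R, 0 < e -> exists N, forall n, (N <= n)%N -> d (u n) x < e.

Definition d_complete (d : X -> X -> R) : Prop :=
  forall u, d_cauchy d u -> exists x, d_converges d u x.

Definition F_space (d : X -> X -> R) : Prop :=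
  [/\ is_metric d, translation_invariant d, add_continuous d,
      scale_continuous d & d_complete d].

Definition nondecreasing_metric (d : X -> X -> R) : Prop :=
  forall (a : R) x, 0 <= a <= 1 -> d (a *: x) 0 <= d x 0.

(* boundedness in the topological vector space sense, for a family
   {x_n}_{n in N0} *)
Definition tvs_bounded_family (d : X -> X -> R) (N0 : set nat)
  (x : nat -> X) : Prop :=
  forall r : R, 0 < r -> exists2 lam : R, 0 < lam &
    forall n, N0 n -> exists y, d y 0 <= r /\ x n = lam *: y.

Definition proper_subset (A B : set X) : Prop := A `<=` B /\ A <> B.

Definition approximation_scheme (d : X -> X -> R) (A : nat -> set X) : Prop :=
  [/\ (forall n, proper_subset (A n) (A n.+1)),
      (exists K : nat -> nat, forall n, (n <= K n)%N /\
          forall a b, A n a -> A n b -> A (K n) (a + b)),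
      (forall n (lam : R) a, A n a -> A n (lam *: a)) &
      (forall x (e : R), 0 < e -> exists n a, A n a /\ d x a < e)].

(* E(x,A) = inf_{a in A} d(x,a), in the extended reals (inf of empty = +oo) *)
Definition Edist (d : X -> X -> R) (x : X) (A : set X) : \bar R :=
  ereal_inf [set (d x a)%:E | a in A].

Definition bigO_seq (d : X -> X -> R) (x : X) (A : nat -> set X)
  (eps : nat -> R) : Prop :=
  exists2 C : R, 0 < C & exists N, forall n, (N <= n)%N ->
    (Edist d x (A n) <= (C * eps n)%:E)%E.

Definition satisfies_Shapiro (d : X -> X -> R) (A : nat -> set X) : Prop :=
  forall eps : nat -> R,
    (forall n, 0 <= eps n) -> (forall n, eps n.+1 <= eps n) ->
    (forall e : R, 0 < e -> exists N, forall n, (N <= n)%N -> eps n < e) ->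
    exists x : X, ~ bigO_seq d x A eps.

End FSpace.

(* Main.v *)
Require Import Defs.
From HB Require Import structures.
From mathcomp Require Import all_boot all_order all_algebra.
From mathcomp Require Import all_classical all_reals ereal.
From mathcomp Require Import lra.
Import Order.TTheory GRing.Theory Num.Theory.
Local Open Scope classical_set_scope.
Local Open Scope ring_scope.

Lemma dsub_ {R : realType} {X : lmodType R} {d : X -> X -> R} :
  translation_invariant d -> forall u v, d u v = d (u - v) 0.
Proof. by move=> HT u v; rewrite -(HT (u - v) 0 v) subrK add0r. Qed.

Lemma dnat_ {R : realType} {X : lmodType R} {d : X -> X -> R} :
  is_metric d -> translation_invariant d ->
  forall z m, d (z *+ m) 0 <= m%:R * d z 0.
Proof.
move=> [d0 [dEq [dC dTr]]] HT z; elim=> [|m IH].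
  by rewrite mulr0n mul0r; have /dEq -> : (0 : X) = 0 by [].
rewrite mulrS [_.+1%:R]mulrS mulrDl mul1r.
apply: le_trans (dTr _ (z *+ m) _) _.
rewrite (dsub_ HT (z + _)) addrK; exact: lerD.
Qed.

Lemma nest_ {X : Type} {A : nat -> set X} :
  (forall n, A n `<=` A n.+1) -> forall n m a, (n <= m)%N -> A n a -> A m a.
Proof.
move=> HA n m a; elim: m => [|m IH]; first by rewrite leqn0 => /eqP ->.
rewrite leq_eqVlt => /orP[/eqP -> //|]; rewrite ltnS => /IH H /H; exact: HA.
Qed.

Lemma inf_N0_ (N0 : set nat) : infinite_set N0 ->
  forall n, exists m, (n <= m)%N /\ N0 m.
Proof.
move=> HI n; apply: contrapT => Hn; apply: HI.
apply: (@sub_finite_set _ _ `I_n) => // m Nm /=.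
rewrite ltnNge; apply/negP => nm; apply: Hn; by exists m.
Qed.

Theorem mainTheorem4 (R : realType) (X : lmodType R) (d : X -> X -> R)
  (A : nat -> set X) :
  F_space d -> nondecreasing_metric d -> approximation_scheme d A ->
  (exists (N0 : set nat) (x : nat -> X) (c : R),
     infinite_set N0 /\ tvs_bounded_family d N0 x /\ 0 < c /\
     (forall n, N0 n -> (c%:E <= Edist d (x n) (A n))%E)) ->
  satisfies_Shapiro d A.
Proof.
move=> [Hmet HT _ _ Hcomp] Hnd [Hprop [K HK] Hsc Hden]
  [N0 [x [c [HN0 [Hb [c0 Hc]]]]]].
have Hmet' := Hmet; move: Hmet' => [d0 [dEq [dC dTr]]].
have dsub := dsub_ HT.
have nest : forall n m a, (n <= m)%N -> A n a -> A m a.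
  by apply: nest_ => n; case: (Hprop n).
have Hc' : forall n a, N0 n -> A n a -> c <= d (x n) a.
  move=> n a Nn Aa; move/ereal_infP: (Hc n Nn) => /(_ (d (x n) a)%:E).
  by rewrite lee_fin; apply; exists a.
have G : forall r, 0 < r -> exists2 del, 0 < del &
    forall n, exists y, d y 0 <= r /\ forall a, A n a -> del <= d y a.
  move=> r r0; have [lam lam0 Hl] := Hb r r0.
  have Hm := archi_boundP (ltW lam0).
  set m := Num.Def.archi_bound lam in Hm.
  have M0 : 0 < m%:R :> R by apply: lt_trans Hm.
  exists (c / m%:R); first exact: divr_gt0.
  move=> n; have [n' [nn' Nn']] := inf_N0_ _ HN0 n.
  have [y [yr xy]] := Hl n' Nn'; exists y; split => // a Aa.
  rewrite ler_pdivrMr //.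
  have := Hc' n' (lam *: a) Nn' (Hsc _ _ _ (nest _ _ _ nn' Aa)).
  move=> /le_trans; apply.
  rewrite xy dsub -scalerBr.
  have -> : lam *: (y - a) = (lam / m%:R) *: (m%:R *: (y - a)).
    by rewrite scalerA divfK // gt_eqF.
  apply: le_trans (Hnd _ _ _) _.
    by rewrite divr_ge0 ?ltW //= ltr_pdivrMr // mul1r.
  by rewrite scaler_nat mulrC (dsub y a); apply: dnat_.
move=> eps eps0 epsdec epslim.
pose P (t : nat * X * R) (o : X * nat * R) :=
  0 < t.2 -> [/\ 0 < o.2, d o.1.1 0 <= t.2,
     (forall a, A (K o.1.2) a -> o.2 <= d o.1.1 a),
     (exists b, A o.1.2 b /\ d t.1.2 b < o.2 / 4) &
     ((t.1.1 <= o.1.2)%N /\ ((t.1.1).+1)%:R * eps o.1.2 < o.2 / 4)].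
have step : forall t, exists o, P t o.
  move=> [[k s] r]; case: (ltrP 0 r) => r0; last first.
    by exists (0, 0%N, 0) => /= h; move: r0; rewrite leNgt h.
  have [del del0 Hdel] := G r r0.
  have [m [b [Ab sb]]] := Hden s (del / 4) (divr_gt0 del0 (ltr0Sn _ _)).
  have [N HN] := epslim (del / 4 / (k.+1)%:R)
    (divr_gt0 (divr_gt0 del0 (ltr0Sn _ _)) (ltr0Sn _ _)).
  pose n := maxn (maxn m k) N.
  have [y [yr Hy]] := Hdel (K n).
  exists (y, n, del) => _ /=; split => //.
    by exists b; split => //; apply: nest Ab; rewrite !leq_max leqnn.
  split; first by rewrite !leq_max leqnn orbT.
  rewrite mulrC -ltr_pdivlMr ?ltr0Sn //; apply: HN; exact: leq_maxr.
have [f hf] := boolp.choice step.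
pose st := fix st (k : nat) : X * R := if k is k'.+1 then
  ((st k').1 + (f (k', (st k').1, (st k').2)).1.1,
   Num.min ((st k').2 / 2) ((f (k', (st k').1, (st k').2)).2 / 8))
  else (0, 1).
pose s k := (st k).1. pose r k := (st k).2. pose o k := f (k, s k, r k).
have sS : forall k, s k.+1 = s k + (o k).1.1 by [].
have rS : forall k, r k.+1 = Num.min (r k / 2) ((o k).2 / 8) by [].
have rpos : forall k, 0 < r k.
  elim=> [|k IH]; first by rewrite /r /= ltr01.
  have [del0 _ _ _ _] := hf (k, s k, r k) IH.
  by rewrite rS lt_min !divr_gt0.
have ho k := hf (k, s k, r k) (rpos k).
have rhalf k : r k.+1 <= r k / 2 by rewrite rS ge_min lexx.
have rdel k : r k.+1 <= (o k).2 / 8 by rewrite rS ge_min lexx orbT.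
have dyr k : d (o k).1.1 0 <= r k by have [] := ho k.
have dxx : forall u, d u u = 0 by move=> u; exact: (proj2 (dEq u u) erefl).
have dss : forall k m, (k <= m)%N -> d (s m) (s k) <= 2 * (r k - r m).
  move=> k; elim=> [|m IH].
    by rewrite leqn0 => /eqP ->; rewrite dxx subrr mulr0.
  rewrite leq_eqVlt => /orP[/eqP <-|]; first by rewrite dxx subrr mulr0.
  rewrite ltnS => /IH H.
  apply: le_trans (dTr _ (s m) _) _.
  rewrite sS (dsub (s m + _)) addrAC subrr add0r.
  have := dyr m; have := rhalf m; have := rpos m.+1; lra.
have rbound : forall k, r k * (k.+1)%:R <= 1.
  elim=> [|k IH]; first by rewrite /r /= mul1r.
  have -> : (k.+2)%:R = (k.+1)%:R + 1 :> R by rewrite mulrSr.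
  have k1 : 1 <= (k.+1)%:R :> R by rewrite ler1n.
  have := rhalf k; have := rpos k.+1; have := rpos k; nra.
have cauchy : d_cauchy d s.
  move=> e e0; have Hm := archi_boundP (ltW (divr_gt0 (ltr0Sn R 3) e0)).
  set N := Num.Def.archi_bound _ in Hm.
  exists N => m n Nm Nn.
  have h1 := dss N m Nm; have h2 := dss N n Nn.
  apply: le_lt_trans (dTr _ (s N) _) _; rewrite (dC (s N)).
  have hN : (N%:R : R) <= (N.+1)%:R by rewrite ler_nat.
  move: Hm; rewrite ltr_pdivrMr // => Hm.
  have := rbound N; have := rpos N; have := rpos m; have := rpos n.
  move=> *; have : 4 * r N < e by nra.
  lra.
have [xl hxl] := Hcomp s cauchy.
have tail : forall k, d xl (s k) <= 2 * r k.
  move=> k; apply/ler_addgt0Pr => e e0; have [N HN] := hxl e e0.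
  pose m := maxn N k.
  apply: le_trans (dTr _ (s m) _) _.
  have := HN m (leq_maxl _ _); rewrite dC => h.
  have := dss k m (leq_maxr _ _); have := rpos m; lra.
have lower : forall k a, A (o k).1.2 a -> (o k).2 / 2 <= d xl a.
  move=> k a Aa; have [del0 _ Hy [b [Ab sb]] _] := ho k.
  have Hab : A (K (o k).1.2) (a - b).
    apply: (proj2 (HK _)) => //; rewrite -scaleN1r; exact: Hsc.
  have := Hy _ Hab.
  have -> : d (o k).1.1 (a - b) = d ((o k).1.1 + b) a.
    by rewrite dsub [RHS]dsub opprB addrA.
  move=> h1; have h2 := dTr ((o k).1.1 + b) xl a.
  have h3 := dTr ((o k).1.1 + b) (s k.+1) xl.
  have h4 : d ((o k).1.1 + b) (s k.+1) = d (s k) b.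
    rewrite sS dsub [RHS]dC [RHS]dsub; congr (d _ 0).
    by rewrite [s k + _]addrC opprD addrACA subrr add0r.
  have h5 := tail k.+1; have h6 := rdel k.
  rewrite [d xl _]dC in h5; lra.
exists xl => -[C C0 [N HN]].
have hC := archi_boundP (ltW C0).
set kk := maxn N (Num.Def.archi_bound C).
have [del0 _ _ _ [hk hek]] := ho kk.
have hE := HN _ (leq_trans (leq_maxl _ _) hk).
have hL : (((o kk).2 / 2)%:E <= Edist d xl (A (o kk).1.2))%E.
  apply/ereal_infP => _ [a Aa <-]; rewrite lee_fin; exact: lower.
have := le_trans hL hE; rewrite lee_fin => h.
have hCk : C <= (kk.+1)%:R.
  by apply: le_trans (ltW hC) _; rewrite ler_nat ltnW // ltnS leq_maxr.
have := eps0 (o kk).1.2; nra.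
Qed.
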